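(* Let $G\subset\mathrm{SU}(2)$ be a subgroup and let $\sigma\in\operatorname{Hom}(\pi_1(M),G)$, with $[\sigma]\in E$ having global coordinates $(x,y,z)$. Then for every permutation $(x',y',z')$ of $(x,y,z)$ there is $\sigma'\in\operatorname{Hom}(\pi_1(M),G)$ whose class has global coordinates $(x',y',z')$. If in addition $-I\in G$, then each of the triples $(-x,y,-z)$, $(x,-y,-z)$, $(-x,-y,z)$ is likewise the global coordinate triple of the class of some element of $\operatorname{Hom}(\pi_1(M),G)$.
   Context: $M$ is a torus with one boundary component; $\pi_1(M)$ is the free group on $X,Y$. $E=\operatorname{Hom}(\pi_1(M),\mathrm{SU}(2))/\mathrm{SU}(2)$ (conjugation action), and the global coordinates of a class $[\sigma]\in E$ are $(\operatorname{tr}\sigma(X),\operatorname{tr}\sigma(Y),\operatorname{tr}\sigma(XY))$, which determine the class uniquely. *)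

(* Defs.v *)
From HB Require Import structures.
From mathcomp Require Import all_boot all_order all_algebra all_fingroup.
From mathcomp Require Import complex.
From mathcomp Require Import reals.
Set Implicit Arguments. Unset Strict Implicit. Unset Printing Implicit Defensive.
Import Order.TTheory GRing.Theory Num.Theory.
Local Open Scope ring_scope.
Local Open Scope complex_scope.

Definition mat2 (R : realType) := 'M[R[i]]_2.

Definition adjoint (R : realType) (A : mat2 R) : mat2 R :=
  (map_mx (fun z : R[i] => z^*) A)^T.

Definition SU2 (R : realType) (A : mat2 R) : Prop :=
  A *m adjoint A = 1%:M /\ \det A = 1.

Definition is_subgroup_SU2 (R : realType) (G : mat2 R -> Prop) : Prop :=
  (forall A, G A -> SU2 A) /\ G 1%:M /\
  (forall A B, G A -> G B -> G (A *m B)) /\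
  (forall A, G A -> G (invmx A)).

(* Hom(pi_1(M), G) for pi_1(M) free on X, Y: a homomorphism is determined
   by (and freely determined from) the images sigma(X), sigma(Y) in G. *)
Record hom_F2 (R : realType) (G : mat2 R -> Prop) := HomF2 {
  sigX : mat2 R; sigY : mat2 R; sigX_in : G sigX; sigY_in : G sigY }.

Definition coords (R : realType) (G : mat2 R -> Prop) (s : hom_F2 G)
  : 'I_3 -> R[i] :=
  fun k => match val k with
           | 0%N => \tr (sigX s)
           | 1%N => \tr (sigY s)
           | _ => \tr (sigX s *m sigY s)
           end.

Definition iX : 'I_3 := @Ordinal 3 0 isT.
Definition iY : 'I_3 := @Ordinal 3 1 isT.
Definition iXY : 'I_3 := @Ordinal 3 2 isT.

(* Main.v *)
Require Import Defs.
From HB Require Import structures.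
From mathcomp Require Import all_boot all_order all_algebra all_fingroup.
From mathcomp Require Import complex.
From mathcomp Require Import reals.
Import Order.TTheory GRing.Theory Num.Theory.
Local Open Scope ring_scope.
Lemma tr_adj2 (F : comUnitRingType) (M : 'M[F]_2) : \tr (\adj M) = \tr M.
Proof.
rewrite /mxtrace !big_ord_recr !big_ord0 /= !mxE /cofactor !det_mx11 !mxE /=.
rewrite !add0r /= !expr0 !mul1r -signr_odd /= expr0 mul1r addrC.
by congr (_ + _); congr (M _ _); apply/val_inj.
Qed.
Lemma tr_inv2 (F : comUnitRingType) (M : 'M[F]_2) : \det M = 1 -> \tr (invmx M) = \tr M.
Proof.
move=> dM; rewrite /invmx unitmxE dM unitr1 invr1 scale1r; exact: tr_adj2.
Qed.
Lemma invmxM2 (F : comUnitRingType) n (A B : 'M[F]_n.+1) : A \in unitmx -> B \in unitmx ->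
  invmx (A *m B) = invmx B *m invmx A.
Proof.
move=> uA uB.
have uAB : A *m B \in unitmx by rewrite unitmx_mul uA uB.
have P : (A *m B) *m (invmx B *m invmx A) = 1%:M.
  by rewrite mulmxA -(mulmxA A) mulmxV // mulmx1 mulmxV.
transitivity (invmx (A *m B) *m ((A *m B) *m (invmx B *m invmx A))).
  by rewrite P mulmx1.
by rewrite mulmxA mulVmx // mul1mx.
Qed.

Theorem proposition3p1 (R : realType) (G : mat2 R -> Prop)
  (HG : is_subgroup_SU2 G) (sigma : hom_F2 G) :
  (forall s : 'S_3, exists sigma' : hom_F2 G,
      forall k : 'I_3, coords sigma' k = coords sigma (s k)) /\
  (G (- 1%:M) ->
     let x := coords sigma iX in
     let y := coords sigma iY in
     let z := coords sigma iXY in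
     (exists s1 : hom_F2 G,
        coords s1 iX = - x /\ coords s1 iY = y /\ coords s1 iXY = - z) /\
     (exists s2 : hom_F2 G,
        coords s2 iX = x /\ coords s2 iY = - y /\ coords s2 iXY = - z) /\
     (exists s3 : hom_F2 G,
        coords s3 iX = - x /\ coords s3 iY = - y /\ coords s3 iXY = z)).
Proof.
move: HG => [HSU [H1 [HM HI]]].
have det1 : forall A, G A -> \det A = 1 by move=> A /HSU [].
have uG : forall A, G A -> A \in unitmx.
  by move=> A /det1 d; rewrite unitmxE d unitr1.
case: sigma => A B hA hB.
have tiA : \tr (invmx A) = \tr A by apply: tr_inv2; apply: det1.
have tiB : \tr (invmx B) = \tr B by apply: tr_inv2; apply: det1.
have hz : \tr (invmx B *m invmx A) = \tr (A *m B).
  by rewrite -invmxM2 ?uG // tr_inv2 // det_mulmx !det1 // mulr1.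
have hiA := HI _ hA; have hiB := HI _ hB.
split.
  pose f (n : nat) := match n with 0%N => \tr A | 1%N => \tr B | _ => \tr (A *m B) end.
  have key : forall a b c : nat, (a < 3)%N -> (b < 3)%N -> (c < 3)%N ->
      a != b -> a != c -> b != c -> exists s' : hom_F2 G,
      [/\ coords s' iX = f a, coords s' iY = f b & coords s' iXY = f c].
    move=> [|[|[|a]]] [|[|[|b]]] [|[|[|c]]] //= _ _ _ _ _ _.
    - by exists (HomF2 hA hB).
    - exists (HomF2 hA (HM _ _ hiA hiB)); rewrite /coords /=; split => //.
        by rewrite mxtrace_mulC hz.
      by rewrite mulmxA mulmxV ?uG // mul1mx tiB.
    - by exists (HomF2 hB hA); rewrite /coords /= mxtrace_mulC.
    - exists (HomF2 hB (HM _ _ hiB hiA)); rewrite /coords /=; split => //.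
      by rewrite mulmxA mulmxV ?uG // mul1mx tiA.
    - exists (HomF2 (HM _ _ hiB hiA) hA); rewrite /coords /=; split => //.
      by rewrite -mulmxA mulVmx ?uG // mulmx1 tiB.
    - exists (HomF2 (HM _ _ hiB hiA) hB); rewrite /coords /=; split => //.
      by rewrite mxtrace_mulC mulmxA mulmxV ?uG // mul1mx tiA.
  have cf : forall k : 'I_3, coords (HomF2 hA hB) k = f (val k).
    by move=> k; rewrite /coords; case: (val k) => [|[|]].
  move=> s.
  have inj := @perm_inj _ s.
  have [s' [e1 e2 e3]] : exists s' : hom_F2 G,
      [/\ coords s' iX = f (s iX), coords s' iY = f (s iY) & coords s' iXY = f (s iXY)].
    apply: key; rewrite ?ltn_ord // (inj_eq (@ord_inj 3)) (inj_eq inj) //.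
  exists s' => k; rewrite cf.
  case: k => [[|[|[|k]]] Hk] //.
  - by rewrite (_ : Ordinal Hk = iX) //; apply/val_inj.
  - by rewrite (_ : Ordinal Hk = iY) //; apply/val_inj.
  - by rewrite (_ : Ordinal Hk = iXY) //; apply/val_inj.
move=> hN /=.
have nA := HM _ _ hN hA; have nB := HM _ _ hN hB.
split; last split.
- exists (HomF2 nA hB); rewrite /coords /= !mulNmx !mul1mx !raddfN; split => //.
- exists (HomF2 hA nB); rewrite /coords /= !mulNmx !mulmxN !mul1mx !raddfN; split => //.
- exists (HomF2 nA nB); rewrite /coords /= !mulNmx !mulmxN !mul1mx opprK !raddfN; split => //.
Qed.
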